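(* Consider the Qs predictor with queue capacity $1$ processing an arbitrary sequence of items $o^{(1)},o^{(2)},\dots$, with probability estimate $Q^{(t)}(i)=1/Y_i^{(t)}$ for every item $i$ that has a counter at time $t$. Then at every time $t\ge2$: (1) for every item $i$ with a counter, $Y_i^{(t)}=1$ if $i=o^{(t-1)}$, and otherwise $Y_i^{(t)}=Y_i^{(t-1)}+1$; (2) there is exactly one item with $Y_i^{(t)}=1$ (equivalently $Q^{(t)}(i)=1$), namely $o^{(t-1)}$, and for every integer $k\ge2$ there is at most one item with $Y_i^{(t)}=k$ (equivalently $Q^{(t)}(i)=1/k$); (3) for every threshold $p>0$, $N(Q^{(t)},p)<1/p$, where $N(Q,p):=|\{i: Q(i)>p\}|$.
   Context: The Qs predictor with queue capacity $1$ keeps, for each item it has observed, a single counter. At each time $t$ (after predicting), it observes $o^{(t)}$ and updates: the counter of $o^{(t)}$ is set to $1$ (created if absent), and the counter of every other item already having a counter is incremented by $1$; no counters are removed. $Y_i^{(t)}$ denotes the value of item $i$'s counter at time $t$, i.e. after the update at time $t-1$ and before the update at time $t$. Items without a counter have estimate $0$. *)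

(* Defs.v *)
From mathcomp Require Import all_boot all_order all_algebra.
Set Implicit Arguments. Unset Strict Implicit. Unset Printing Implicit Defensive.
Import Order.TTheory GRing.Theory Num.Theory.

(* Qs predictor with queue capacity 1.
   Items live in an arbitrary eqType T; the observed sequence is o : nat -> T,
   with o t the item observed at time t (times start at 1; o 0 is unused).
   A counter state is a map T -> option nat (None = no counter). *)

Definition qs_update (T : eqType) (c : T -> option nat) (x : T) : T -> option nat :=
  fun i => if i == x then Some 1%N else option_map S (c i).

Fixpoint qs_counters (T : eqType) (o : nat -> T) (n : nat) : T -> option nat :=
  match n with
  | 0 => fun _ => None
  | n'.+1 => qs_update (qs_counters o n') (o n'.+1)
  end.

(* Y o t i = Y_i^{(t)}: after the update at time t-1, before the one at time t *)
Definition Y (T : eqType) (o : nat -> T) (t : nat) : T -> option nat :=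
  qs_counters o t.-1.

Definition Q (R : realFieldType) (T : eqType) (o : nat -> T) (t : nat) (i : T) : R :=
  match Y o t i with
  | Some k => (k%:R)^-1
  | None => 0
  end.

(* Main.v *)
Require Import Defs.
From mathcomp Require Import all_boot all_order all_algebra.
Import Order.TTheory GRing.Theory Num.Theory.
Local Open Scope ring_scope.

Lemma counters_pos (T : eqType) (o : nat -> T) (n : nat) (i : T) :
  qs_counters o n i <> Some 0%N.
Proof.
case: n => [|n] //=; rewrite /qs_update; case: eqP => // _.
by case: (qs_counters o n i).
Qed.

Lemma counters_inj (T : eqType) (o : nat -> T) (n : nat) (i j : T) (k : nat) :
  qs_counters o n i = Some k -> qs_counters o n j = Some k -> i = j.
Proof.
elim: n k => [|n IH] k //=.
rewrite /qs_update.
case: (eqVneq i (o n.+1)) => [->|Hi]; case: (eqVneq j (o n.+1)) => [->|Hj] //.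
- move=> E1 E2; rewrite -E1 in E2; move: E2; have := @counters_pos T o n j.
  by case: (qs_counters o n j) => //= a1 H [] E; rewrite E in H.
- move=> E2 E1; rewrite -E1 in E2; move: E2; have := @counters_pos T o n i.
  by case: (qs_counters o n i) => //= a1 H [] E; rewrite E in H.
- case Ei: (qs_counters o n i) => [a|] //=; case Ej: (qs_counters o n j) => [b|] //= [<-] [Eb].
  by apply: (IH a) => //; rewrite Ej Eb.
Qed.

Lemma max_in (l : seq nat) : l != [::] -> (\max_(k <- l) k)%N \in l.
Proof.
elim: l => [|a l IHl] //= _; rewrite big_cons.
case: l IHl => [|b l] IHl; first by rewrite big_nil maxn0 mem_seq1.
move: (IHl isT); case: leqP => H Hm.
  by rewrite in_cons Hm orbT.
by rewrite in_cons eqxx.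
Qed.

Theorem lemma12 (R : realFieldType) (T : eqType) (o : nat -> T) (t : nat) :
  (2 <= t)%N ->
  (* (1) *)
  (forall (i : T) (k : nat), Y o t i = Some k ->
     (i = o t.-1 -> k = 1%N) /\
     (i <> o t.-1 -> exists k' : nat, Y o t.-1 i = Some k' /\ k = k'.+1)) /\
  (* (2) *)
  (Y o t (o t.-1) = Some 1%N /\ (forall i : T, Y o t i = Some 1%N -> i = o t.-1) /\
   (forall (k : nat) (i j : T), (2 <= k)%N ->
      Y o t i = Some k -> Y o t j = Some k -> i = j)) /\
  (* (3): N(Q^{(t)}, p) < 1/p, i.e. every duplicate-free list of items i with
     Q^{(t)}(i) > p has fewer than 1/p elements *)
  (forall p : R, 0 < p ->
     forall s : seq T, uniq s -> (forall i, i \in s -> p < Q R o t i) ->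
       (size s)%:R < p^-1).
Proof.
case: t => [|[|t]] // _.
have YE : forall i, Y o t.+2 i = qs_update (qs_counters o t) (o t.+1) i by [].
have Y1 : Y o t.+2.-1 = qs_counters o t by [].
split.
  move=> i k; rewrite YE Y1 /qs_update /=.
  case: eqP => [-> [] <- //|Hi].
  case: (qs_counters o t i) => //= a [] <-; split=> // _; by exists a.
split.
  split; first by rewrite YE /qs_update eqxx.
  split; last by move=> k i j _; apply: counters_inj.
  move=> i H; apply: (@counters_inj T o t.+1 _ _ 1%N); first exact H.
  by rewrite /= /qs_update eqxx.
move=> p p0 s us Hs.
set f := fun i => odflt 0%N (Y o t.+2 i).
have Hf : forall i, i \in s -> Y o t.+2 i = Some (f i) /\ (0 < f i)%N /\ (f i)%:R < p^-1.
  move=> i /Hs; rewrite /Q /f; case: (Y o t.+2 i) => [k|] /=; last by rewrite ltNge ltW.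
  case: k => [|k]; first by rewrite invr0 ltNge ltW.
  move=> H; split=> //; split=> //.
  by rewrite -(invrK (k.+1%:R)) ltf_pV2 // ?posrE ?invr_gt0 ?ltr0Sn.
set ks := map f s.
have uks : uniq ks.
  rewrite map_inj_in_uniq // => i j Hi Hj E.
  have [Hi1 _] := Hf i Hi; have [Hj1 _] := Hf j Hj.
  apply: (@counters_inj T o t.+1 _ _ (f i)); [exact Hi1 | rewrite E; exact Hj1].
case: s us Hs Hf @ks uks => [|x s] us Hs Hf ks uks; first by rewrite invr_gt0.
set M := (\max_(k <- ks) k)%N.
have Min : M \in ks.
  by apply: max_in.
have sub : {subset ks <= iota 1 M}.
  move=> k Hk; rewrite mem_iota.
  move/mapP: (Hk) => [i Hi ->]; have [_ [H1 _]] := Hf i Hi.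
  rewrite H1 /= add1n ltnS; exact: (@leq_bigmax_seq nat ks predT id (f i) (map_f f Hi) isT).
have Hsz : (size ks <= M)%N by rewrite -(size_iota 1 M); apply: uniq_leq_size.
move/mapP: Min => [i Hi EM]; have [_ [_ HM]] := Hf i Hi.
apply: le_lt_trans HM; rewrite -EM ler_nat -(size_map f); exact: Hsz.
Qed.
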